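(* Let $x,y,z$ be local coordinates on a 3-manifold and let $E,K,P$ be functions of $x$ only, $F,L,Q$ functions of $y$ only, $G,M,R$ functions of $z$ only, with $\Delta:=ELR+FMP+GKQ-EMQ-FKR-GLP\neq 0$ and $LR-MQ$, $MP-KR$, $KQ-LP$ nonzero. Consider the Stäckel metric $$g=\frac{\Delta}{LR-MQ}dx^2+\frac{\Delta}{MP-KR}dy^2+\frac{\Delta}{KQ-LP}dz^2$$ and the quadratic forms $$I_2=\frac{\Delta(GQ-FR)}{(LR-MQ)^2}dx^2+\frac{\Delta(ER-GP)}{(MP-KR)^2}dy^2+\frac{\Delta(FP-EQ)}{(KQ-LP)^2}dz^2,$$ $$I_3=\frac{\Delta(FM-GL)}{(LR-MQ)^2}dx^2+\frac{\Delta(GK-EM)}{(MP-KR)^2}dy^2+\frac{\Delta(EL-FK)}{(KQ-LP)^2}dz^2,$$ which are (classically known) first integrals, quadratic in velocities, of the geodesic flow of $g$. Fix constants $\lambda,\mu\in\mathbb{R}$ such that on an open set $U$ the equations $I_2-\lambda g=0$, $I_3-\mu g=0$ define at each point $m\in U$ four distinct real points of $PT_mM$, giving four direction fields $\tau_1,\dots,\tau_4$. Then: the integral curves of each $\tau_i$ are geodesics of $g$; at each point there are three mutually orthogonal planes $\pi_1,\pi_2,\pi_3\subset T_mM$ (namely the tangent planes to the coordinate surfaces $x=\mathrm{const}$, $y=\mathrm{const}$, $z=\mathrm{const}$) such that, for any fixed $k$, the reflections in $\pi_1,\pi_2,\pi_3$ map $\tau_k$ onto the other three directions; and the distributions $\pi_1,\pi_2,\pi_3$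 are integrable.
   Context: Quadratic forms such as $dx^2$ are evaluated on tangent vectors (velocities). A direction field is a smooth field of lines in $TM$. *)

(* Defs.v *)
From Stdlib Require Import Reals Lra.
From Coquelicot Require Import Coquelicot.
Open Scope R_scope.

(* Points of the coordinate chart and tangent vectors, both as triples. *)
Record V3 := mkV3 { vx : R ; vy : R ; vz : R }.

Definition coord (v : V3) (k : nat) : R :=
  match k with 1%nat => vx v | 2%nat => vy v | 3%nat => vz v | _ => 0 end.

Definition setc (m : V3) (k : nat) (t : R) : V3 :=
  match k with
  | 1%nat => mkV3 t (vy m) (vz m)
  | 2%nat => mkV3 (vx m) t (vz m)
  | 3%nat => mkV3 (vx m) (vy m) t
  | _ => m end.

Definition e_ (k : nat) : V3 :=
  mkV3 (if Nat.eqb k 1 then 1 else 0) (if Nat.eqb k 2 then 1 else 0)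
       (if Nat.eqb k 3 then 1 else 0).

Definition v3scale (c : R) (v : V3) : V3 := mkV3 (c * vx v) (c * vy v) (c * vz v).
Definition v3sub (v w : V3) : V3 := mkV3 (vx v - vx w) (vy v - vy w) (vz v - vz w).
Definition v3zero : V3 := mkV3 0 0 0.

Definition partial (k : nat) (f : V3 -> R) (m : V3) : R :=
  Derive (fun t => f (setc m k t)) (coord m k).

Definition open_in_R3 (U : V3 -> Prop) : Prop :=
  forall m, U m -> exists eps, eps > 0 /\
    forall m', Rabs (vx m' - vx m) < eps -> Rabs (vy m' - vy m) < eps ->
               Rabs (vz m' - vz m) < eps -> U m'.

Definition smooth_at (f : R -> R) (t : R) : Prop := forall n, ex_derive_n f n t.

Record StackelData := mkStackel {
  fE : R -> R ; fK : R -> R ; fP : R -> R ;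
  fF : R -> R ; fL : R -> R ; fQ : R -> R ;
  fG : R -> R ; fM : R -> R ; fR : R -> R }.

Section Stackel.
Variable S : StackelData.
Let E m := fE S (vx m). Let K m := fK S (vx m). Let P m := fP S (vx m).
Let F m := fF S (vy m). Let L m := fL S (vy m). Let Q m := fQ S (vy m).
Let G m := fG S (vz m). Let M m := fM S (vz m). Let Rr m := fR S (vz m).

Definition stDelta (m : V3) : R :=
  E m * L m * Rr m + F m * M m * P m + G m * K m * Q m
  - E m * M m * Q m - F m * K m * Rr m - G m * L m * P m.
Definition D1 (m : V3) : R := L m * Rr m - M m * Q m.
Definition D2 (m : V3) : R := M m * P m - K m * Rr m.
Definition D3 (m : V3) : R := K m * Q m - L m * P m.

Definition gc (k : nat) (m : V3) : R :=
  match k with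
  | 1%nat => stDelta m / D1 m
  | 2%nat => stDelta m / D2 m
  | 3%nat => stDelta m / D3 m
  | _ => 0 end.
Definition I2c (k : nat) (m : V3) : R :=
  match k with
  | 1%nat => stDelta m * (G m * Q m - F m * Rr m) / (D1 m) ^ 2
  | 2%nat => stDelta m * (E m * Rr m - G m * P m) / (D2 m) ^ 2
  | 3%nat => stDelta m * (F m * P m - E m * Q m) / (D3 m) ^ 2
  | _ => 0 end.
Definition I3c (k : nat) (m : V3) : R :=
  match k with
  | 1%nat => stDelta m * (F m * M m - G m * L m) / (D1 m) ^ 2
  | 2%nat => stDelta m * (G m * K m - E m * M m) / (D2 m) ^ 2
  | 3%nat => stDelta m * (E m * L m - F m * K m) / (D3 m) ^ 2
  | _ => 0 end.
End Stackel.

Definition qf (c : nat -> V3 -> R) (m v : V3) : R :=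
  c 1%nat m * (vx v) ^ 2 + c 2%nat m * (vy v) ^ 2 + c 3%nat m * (vz v) ^ 2.

Definition gbil (S : StackelData) (m v w : V3) : R :=
  gc S 1 m * vx v * vx w + gc S 2 m * vy v * vy w + gc S 3 m * vz v * vz w.

Definition on_cone (S : StackelData) (lam mu : R) (m v : V3) : Prop :=
  v <> v3zero /\
  qf (I2c S) m v - lam * qf (gc S) m v = 0 /\
  qf (I3c S) m v - mu * qf (gc S) m v = 0.

(* v and w define the same point of the projectivized tangent space *)
Definition same_line (v w : V3) : Prop := exists c, c <> 0 /\ w = v3scale c v.

Definition four_directions (S : StackelData) (lam mu : R) (m : V3) : Prop :=
  exists v1 v2 v3 v4 : V3,
    on_cone S lam mu m v1 /\ on_cone S lam mu m v2 /\
    on_cone S lam mu m v3 /\ on_cone S lam mu m v4 /\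
    ~ same_line v1 v2 /\ ~ same_line v1 v3 /\ ~ same_line v1 v4 /\
    ~ same_line v2 v3 /\ ~ same_line v2 v4 /\ ~ same_line v3 v4 /\
    forall v, on_cone S lam mu m v ->
      same_line v1 v \/ same_line v2 v \/ same_line v3 v \/ same_line v4 v.

Definition vel (gam : R -> V3) (t : R) : V3 :=
  mkV3 (Derive (fun s => vx (gam s)) t) (Derive (fun s => vy (gam s)) t)
       (Derive (fun s => vz (gam s)) t).

Definition regular_curve (U : V3 -> Prop) (a b : R) (gam : R -> V3) : Prop :=
  a < b /\
  forall t, a < t < b ->
    U (gam t) /\
    (forall k, (1 <= k <= 3)%nat ->
       ex_derive (fun s => coord (gam s) k) t /\
       ex_derive (Derive (fun s => coord (gam s) k)) t) /\
    vel gam t <> v3zero.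

(* gam is a (not necessarily affinely parametrized) geodesic of g:
   nabla_{gam'} gam' is proportional to gam'; written with lowered index
   d/dt (g_kk gam'^k) - 1/2 sum_i d_k g_ii (gam'^i)^2 = h(t) g_kk gam'^k. *)
Definition pregeodesic (S : StackelData) (a b : R) (gam : R -> V3) : Prop :=
  exists h : R -> R, forall t, a < t < b -> forall k, (1 <= k <= 3)%nat ->
    Derive (fun s => gc S k (gam s) * coord (vel gam s) k) t
    - / 2 * (partial k (gc S 1) (gam t) * (vx (vel gam t)) ^ 2
             + partial k (gc S 2) (gam t) * (vy (vel gam t)) ^ 2
             + partial k (gc S 3) (gam t) * (vz (vel gam t)) ^ 2)
    = h t * gc S k (gam t) * coord (vel gam t) k.

(* the plane pi_k at a point: kernel of dx_k, i.e. tangent plane to the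
   coordinate surface x_k = const *)
Definition in_pi (k : nat) (v : V3) : Prop := coord v k = 0.

Definition greflect (S : StackelData) (m n v : V3) : V3 :=
  v3sub v (v3scale (2 * gbil S m v n / gbil S m n n) n).

(* Frobenius integrability (alpha /\ d alpha = 0) on U of the plane field
   ker alpha, for a nowhere-vanishing 1-form alpha *)
Definition curl (alpha : V3 -> V3) (m : V3) : V3 :=
  mkV3 (partial 2 (fun p => vz (alpha p)) m - partial 3 (fun p => vy (alpha p)) m)
       (partial 3 (fun p => vx (alpha p)) m - partial 1 (fun p => vz (alpha p)) m)
       (partial 1 (fun p => vy (alpha p)) m - partial 2 (fun p => vx (alpha p)) m).
Definition frobenius_integrable (U : V3 -> Prop) (alpha : V3 -> V3) : Prop :=
  forall m, U m -> alpha m <> v3zero /\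
    vx (alpha m) * vx (curl alpha m) + vy (alpha m) * vy (curl alpha m)
    + vz (alpha m) * vz (curl alpha m) = 0.

(* Main.v *)
Require Import Defs.
From Stdlib Require Import Reals Lra Lia Classical.
From Coquelicot Require Import Coquelicot.
Open Scope R_scope.


Definition cone3 (a b v : V3) : Prop :=
  v <> v3zero /\
  vx a * vx v ^ 2 + vy a * vy v ^ 2 + vz a * vz v ^ 2 = 0 /\
  vx b * vx v ^ 2 + vy b * vy v ^ 2 + vz b * vz v ^ 2 = 0.

Definition four3 (a b : V3) : Prop :=
  exists v1 v2 v3 v4 : V3,
    cone3 a b v1 /\ cone3 a b v2 /\ cone3 a b v3 /\ cone3 a b v4 /\
    ~ same_line v1 v2 /\ ~ same_line v1 v3 /\ ~ same_line v1 v4 /\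
    ~ same_line v2 v3 /\ ~ same_line v2 v4 /\ ~ same_line v3 v4 /\
    forall v, cone3 a b v ->
      same_line v1 v \/ same_line v2 v \/ same_line v3 v \/ same_line v4 v.

Lemma sl_sym v w : same_line v w -> same_line w v.
Proof.
  intros [c [Hc ->]]. exists (/ c). split. apply Rinv_neq_0_compat; auto.
  destruct v as [x y z]; unfold v3scale; simpl; f_equal; field; auto.
Qed.

Lemma sl_trans u v w : same_line u v -> same_line v w -> same_line u w.
Proof.
  intros [c [Hc ->]] [d [Hd ->]]. exists (d * c). split. apply Rmult_integral_contrapositive; auto.
  destruct u as [x y z]; unfold v3scale; simpl; f_equal; ring.
Qed.

Ltac pig :=
  match goal with
  | H : same_line ?v ?w, H' : same_line ?v ?w', N : ~ same_line ?w ?w' |- _ =>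
      apply N; apply (sl_trans _ v); [apply sl_sym|]; assumption
  | H : same_line ?v ?w, H' : same_line ?v ?w', N : ~ same_line ?w' ?w |- _ =>
      apply N; apply (sl_trans _ v); [apply sl_sym|]; assumption
  end.

Lemma five_false a b w1 w2 w3 w4 w5 :
  four3 a b ->
  cone3 a b w1 -> cone3 a b w2 -> cone3 a b w3 -> cone3 a b w4 -> cone3 a b w5 ->
  ~ same_line w1 w2 -> ~ same_line w1 w3 -> ~ same_line w1 w4 -> ~ same_line w1 w5 ->
  ~ same_line w2 w3 -> ~ same_line w2 w4 -> ~ same_line w2 w5 ->
  ~ same_line w3 w4 -> ~ same_line w3 w5 -> ~ same_line w4 w5 -> False.
Proof.
  intros [v1 [v2 [v3 [v4 [_ [_ [_ [_ [_ [_ [_ [_ [_ [_ Hall]]]]]]]]]]]]]]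
    C1 C2 C3 C4 C5 N12 N13 N14 N15 N23 N24 N25 N34 N35 N45.
  destruct (Hall _ C1) as [A1|[A1|[A1|A1]]];
  destruct (Hall _ C2) as [A2|[A2|[A2|A2]]]; try pig;
  destruct (Hall _ C3) as [A3|[A3|[A3|A3]]]; try pig;
  destruct (Hall _ C4) as [A4|[A4|[A4|A4]]]; try pig;
  destruct (Hall _ C5) as [A5|[A5|[A5|A5]]]; try pig.
Qed.

Lemma dep2 b c b' c' :
  mkV3 0 b c <> v3zero -> mkV3 0 b' c' <> v3zero -> b * c' = b' * c ->
  same_line (mkV3 0 b c) (mkV3 0 b' c').
Proof.
  intros H1 H2 E.
  destruct (Req_dec b 0) as [Hb|Hb].
  - subst b. assert (Hc : c <> 0) by (intro; subst; apply H1; reflexivity).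
    assert (b' = 0) by (apply (Rmult_eq_reg_r c); [lra|auto]).
    subst b'. assert (Hc' : c' <> 0) by (intro; subst; apply H2; reflexivity).
    exists (c' / c). split. unfold Rdiv; apply Rmult_integral_contrapositive; split; auto with real.
    unfold v3scale; simpl; f_equal; field; auto.
  - exists (b' / b). split.
    + intro Z. assert (b' = 0) by (unfold Rdiv in Z; apply Rmult_integral in Z; destruct Z as [Z|Z]; auto;
        exfalso; apply (Rinv_neq_0_compat b Hb); auto).
      subst b'. assert (c' = 0) by (apply (Rmult_eq_reg_l b); lra). subst; apply H2; reflexivity.
    + unfold v3scale; simpl; f_equal.
      * ring.
      * field; auto.
      * apply (Rmult_eq_reg_l b); auto. replace (b * (b' / b * c)) with (b' * c) by (field; auto). lra.
Qed.

Definition fz (v : V3) : V3 := mkV3 (vx v) (vy v) (- vz v).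

Lemma vz0 x y z : mkV3 x y z <> v3zero -> x <> 0 \/ y <> 0 \/ z <> 0.
Proof. intro H. destruct (Req_dec x 0); destruct (Req_dec y 0); destruct (Req_dec z 0); subst; auto;
  exfalso; apply H; reflexivity. Qed.

Ltac nsl := let c := fresh "c" in let Hc := fresh "Hc" in let E := fresh "E" in
  intros [c [Hc E]]; unfold v3scale in E; simpl in E; injection E; intros; nra.

Lemma planeX a b v1 v2 v3 :
  four3 a b -> cone3 a b v1 -> cone3 a b v2 -> cone3 a b v3 ->
  ~ same_line v1 v2 -> ~ same_line v1 v3 -> ~ same_line v2 v3 ->
  vx v1 = 0 -> vx v2 = 0 -> vx v3 = 0 -> False.
Proof.
  intros F C1 C2 C3 N12 N13 N23 X1 X2 X3.
  assert (Hw : exists w, cone3 a b w /\ vx w = 0 /\ ~ same_line v1 w /\ ~ same_line (fz v1) w).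
  { destruct (classic (same_line (fz v1) v2)) as [S2|S2].
    - exists v3. refine (conj C3 (conj X3 (conj N13 _))). intro S3. apply N23. apply (sl_trans _ (fz v1)); auto. apply sl_sym; auto.
    - exists v2. exact (conj C2 (conj X2 (conj N12 S2))). }
  destruct Hw as [w [Cw [Xw [Nw1 Nw2]]]].
  destruct v1 as [x1 b1 c1]; destruct w as [xw bw cw]; simpl in *; subst x1 xw.
  destruct C1 as [Z1 [A1 B1]]; destruct Cw as [Zw [Aw Bw]]; simpl in *.
  assert (Hd : (b1 * cw - bw * c1) * (b1 * cw + bw * c1) <> 0).
  { intro H. apply Rmult_integral in H. destruct H as [H|H].
    - apply Nw1. apply dep2; auto; lra.
    - apply Nw2. unfold fz; simpl. apply dep2; auto.
      intro E; injection E; intros; apply Z1; unfold v3zero; f_equal; lra. lra. }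
  destruct a as [a1 a2 a3]; destruct b as [bb1 bb2 bb3]; simpl in *.
  assert (Ha2 : a2 = 0).
  { apply (Rmult_eq_reg_r ((b1 * cw - bw * c1) * (b1 * cw + bw * c1))); auto. nra. }
  assert (Ha3 : a3 = 0).
  { apply (Rmult_eq_reg_r ((b1 * cw - bw * c1) * (b1 * cw + bw * c1))); auto. nra. }
  assert (Hb2 : bb2 = 0).
  { apply (Rmult_eq_reg_r ((b1 * cw - bw * c1) * (b1 * cw + bw * c1))); auto. nra. }
  assert (Hb3 : bb3 = 0).
  { apply (Rmult_eq_reg_r ((b1 * cw - bw * c1) * (b1 * cw + bw * c1))); auto. nra. }
  subst.
  assert (HC : forall y z, mkV3 0 y z <> v3zero -> cone3 (mkV3 a1 0 0) (mkV3 bb1 0 0) (mkV3 0 y z)).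
  { intros y z H. repeat split; auto; simpl; ring. }
  apply (five_false _ _ (mkV3 0 1 0) (mkV3 0 0 1) (mkV3 0 1 1) (mkV3 0 1 (-1)) (mkV3 0 1 2) F);
    try (apply HC; intro E; injection E; intros; lra); nsl.
Qed.

Definition sw12 (v : V3) : V3 := mkV3 (vy v) (vx v) (vz v).
Definition sw13 (v : V3) : V3 := mkV3 (vz v) (vy v) (vx v).

Lemma perm_gen (sg : V3 -> V3) :
  (forall v, sg (sg v) = v) ->
  (forall c v, sg (v3scale c v) = v3scale c (sg v)) ->
  (forall a b v, cone3 a b v -> cone3 (sg a) (sg b) (sg v)) ->
  forall a b, four3 a b -> four3 (sg a) (sg b).
Proof.
  intros Inv Sc Co a b [v1 [v2 [v3 [v4 [C1 [C2 [C3 [C4 [N12 [N13 [N14 [N23 [N24 [N34 Hall]]]]]]]]]]]]]].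
  assert (SL : forall v w, same_line (sg v) (sg w) -> same_line v w).
  { intros v w [c [Hc E]]. exists c. split; auto. rewrite <- (Inv w), E, Sc, Inv. reflexivity. }
  assert (SL' : forall v w, same_line v w -> same_line (sg v) (sg w)).
  { intros v w [c [Hc E]]. exists c. split; auto. rewrite E, Sc. reflexivity. }
  exists (sg v1), (sg v2), (sg v3), (sg v4).
  refine (conj (Co _ _ _ C1) (conj (Co _ _ _ C2) (conj (Co _ _ _ C3) (conj (Co _ _ _ C4)
    (conj (fun H => N12 (SL _ _ H)) (conj (fun H => N13 (SL _ _ H)) (conj (fun H => N14 (SL _ _ H))
    (conj (fun H => N23 (SL _ _ H)) (conj (fun H => N24 (SL _ _ H)) (conj (fun H => N34 (SL _ _ H)) _)))))))))).
  intros v Cv. apply Co in Cv. rewrite !Inv in Cv. rewrite <- (Inv v).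
  destruct (Hall _ Cv) as [H|[H|[H|H]]]; [left|right;left|right;right;left|right;right;right]; apply SL'; auto.
Qed.

Lemma sw12_four a b : four3 a b -> four3 (sw12 a) (sw12 b).
Proof.
  apply perm_gen.
  - intros [x y z]; reflexivity.
  - intros c [x y z]; reflexivity.
  - intros [a1 a2 a3] [b1 b2 b3] [x y z] [Z [A B]]; simpl in *. split; [|split; simpl; lra].
    intro E; injection E; intros; subst; apply Z; reflexivity.
Qed.

Lemma sw13_four a b : four3 a b -> four3 (sw13 a) (sw13 b).
Proof.
  apply perm_gen.
  - intros [x y z]; reflexivity.
  - intros c [x y z]; reflexivity.
  - intros [a1 a2 a3] [b1 b2 b3] [x y z] [Z [A B]]; simpl in *. split; [|split; simpl; lra].
    intro E; injection E; intros; subst; apply Z; reflexivity.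
Qed.

Lemma sw12_cone a b v : cone3 a b v -> cone3 (sw12 a) (sw12 b) (sw12 v).
Proof.
  destruct a as [a1 a2 a3]; destruct b as [b1 b2 b3]; destruct v as [x y z]; intros [Z [A B]]; simpl in *.
  split; [|split; simpl; lra]. intro E; injection E; intros; subst; apply Z; reflexivity.
Qed.

Lemma sw13_cone a b v : cone3 a b v -> cone3 (sw13 a) (sw13 b) (sw13 v).
Proof.
  destruct a as [a1 a2 a3]; destruct b as [b1 b2 b3]; destruct v as [x y z]; intros [Z [A B]]; simpl in *.
  split; [|split; simpl; lra]. intro E; injection E; intros; subst; apply Z; reflexivity.
Qed.

Lemma sw12_sl v w : ~ same_line v w -> ~ same_line (sw12 v) (sw12 w).
Proof.
  intros N [c [Hc E]]. apply N. exists c. split; auto.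
  destruct v, w; unfold sw12, v3scale in *; simpl in *; injection E; intros; subst; reflexivity.
Qed.

Lemma sw13_sl v w : ~ same_line v w -> ~ same_line (sw13 v) (sw13 w).
Proof.
  intros N [c [Hc E]]. apply N. exists c. split; auto.
  destruct v, w; unfold sw13, v3scale in *; simpl in *; injection E; intros; subst; reflexivity.
Qed.

Lemma c_one c y : y <> 0 -> y = c * y -> c = 1.
Proof. intros H E. apply (Rmult_eq_reg_r y); auto. lra. Qed.

Lemma nz_x a b v : four3 a b -> cone3 a b v -> vx v <> 0.
Proof.
  intros F Cv X0.
  destruct (classic (exists w, cone3 a b w /\ vx w <> 0 /\ vy w <> 0 /\ vz w <> 0)) as [[w [Cw [Hx [Hy Hz]]]]|NA].
  - destruct w as [x y z]; simpl in *.
    destruct Cw as [Zw [Aw Bw]]; simpl in *.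
    assert (CC : forall x' y' z', x' ^ 2 = x ^ 2 -> y' ^ 2 = y ^ 2 -> z' ^ 2 = z ^ 2 -> cone3 a b (mkV3 x' y' z')).
    { intros x' y' z' E1 E2 E3. split; [|cbn [vx vy vz]; rewrite E1, E2, E3; cbn [vx vy vz] in Aw, Bw; lra].
      intro E; injection E; intros _ _ Ex; subst x'; apply Hx; apply Rsqr_0_uniq; unfold Rsqr; simpl in E1; lra. }
    assert (N5 : forall x' y' z', x' <> 0 -> ~ same_line (mkV3 x' y' z') v).
    { intros x' y' z' H [c [Hc E]]. rewrite E in X0. unfold v3scale in X0; simpl in X0.
      apply Rmult_integral in X0; tauto. }
    apply (five_false a b (mkV3 x y z) (mkV3 (-x) y z) (mkV3 x (-y) z) (mkV3 x y (-z)) v F);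
      try (apply CC; ring); auto; try (apply N5; intro; apply Hx; lra);
      intros [c [Hc E]]; unfold v3scale in E; simpl in E; injection E; intros E3 E2 E1.
    all: try (first [ assert (c = 1) by (apply (Rmult_eq_reg_r y); [lra|auto])
               | assert (c = 1) by (apply (Rmult_eq_reg_r x); [lra|auto])
               | assert (c = 1) by (apply (Rmult_eq_reg_r z); [lra|auto]) ]; subst; first [apply Hx; lra | apply Hy; lra | apply Hz; lra]).
  - assert (NB : forall w, cone3 a b w -> vx w = 0 \/ vy w = 0 \/ vz w = 0).
    { intros w Cw. destruct (Req_dec (vx w) 0); auto. destruct (Req_dec (vy w) 0); auto.
      destruct (Req_dec (vz w) 0); auto. exfalso; apply NA; exists w; auto. }
    pose proof F as F'.
    destruct F' as [v1 [v2 [v3 [v4 [C1 [C2 [C3 [C4 [N12 [N13 [N14 [N23 [N24 [N34 Hall]]]]]]]]]]]]]].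
    destruct v1 as [x1 y1 z1], v2 as [x2 y2 z2], v3 as [x3 y3 z3], v4 as [x4 y4 z4].
    pose (Sx := x1^2 + x2^2 + x3^2 + x4^2).
    pose (Sy := y1^2 + y2^2 + y3^2 + y4^2).
    pose (Sz := z1^2 + z2^2 + z3^2 + z4^2).
    assert (Px : 0 <= Sx) by (unfold Sx; nra).
    assert (Py : 0 <= Sy) by (unfold Sy; nra).
    assert (Pz : 0 <= Sz) by (unfold Sz; nra).
    assert (Cs : cone3 a b (mkV3 (sqrt Sx) (sqrt Sy) (sqrt Sz))).
    { destruct C1 as [Z1 [A1 B1]], C2 as [Z2 [A2 B2]], C3 as [Z3 [A3 B3]], C4 as [Z4 [A4 B4]].
      cbn [vx vy vz] in *. split.
      - intro E; injection E; intros E3 E2 E1.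
        apply sqrt_eq_0 in E1; auto. apply sqrt_eq_0 in E2; auto. apply sqrt_eq_0 in E3; auto.
        apply Z1. unfold Sx, Sy, Sz in *. unfold v3zero; f_equal; nra.
      - cbn [vx vy vz]. rewrite !pow2_sqrt by auto. unfold Sx, Sy, Sz. split; nra. }
    destruct (NB _ Cs) as [E|[E|E]]; cbn [vx vy vz] in E; apply sqrt_eq_0 in E; auto; unfold Sx, Sy, Sz in E.
    + apply (planeX a b _ _ _ F C1 C2 C3 N12 N13 N23); simpl; nra.
    + apply (planeX _ _ _ _ _ (sw12_four _ _ F) (sw12_cone _ _ _ C1) (sw12_cone _ _ _ C2)
        (sw12_cone _ _ _ C3) (sw12_sl _ _ N12) (sw12_sl _ _ N13) (sw12_sl _ _ N23)); simpl; nra.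
    + apply (planeX _ _ _ _ _ (sw13_four _ _ F) (sw13_cone _ _ _ C1) (sw13_cone _ _ _ C2)
        (sw13_cone _ _ _ C3) (sw13_sl _ _ N12) (sw13_sl _ _ N13) (sw13_sl _ _ N23)); simpl; nra.
Qed.

Lemma nz3 a b v : four3 a b -> cone3 a b v -> vx v <> 0 /\ vy v <> 0 /\ vz v <> 0.
Proof.
  intros F C. split; [|split].
  - apply (nz_x a b v F C).
  - apply (nz_x _ _ _ (sw12_four _ _ F) (sw12_cone _ _ _ C)).
  - apply (nz_x _ _ _ (sw13_four _ _ F) (sw13_cone _ _ _ C)).
Qed.

Ltac unf := unfold qf, gc, I2c, I3c, stDelta, D1, D2, D3 in *.

Lemma cone_a1 S lam mu m v : stDelta S m <> 0 -> D1 S m <> 0 -> D2 S m <> 0 -> D3 S m <> 0 ->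
  on_cone S lam mu m v ->
  (gc S 1 m * vx v) ^ 2 = qf (gc S) m v * (fE S (vx m) + lam * fK S (vx m) + mu * fP S (vx m)).
Proof.
  intros H0 H1 H2 H3 [_ [e2 e3]]. unf.
  match goal with e2 : ?A = 0, e3 : ?B = 0 |- ?L = ?R =>
    assert (Id : L - R = fK S (vx m) * A + fP S (vx m) * B) by (field; auto) end.
  rewrite e2, e3 in Id. lra.
Qed.

Lemma cone_a2 S lam mu m v : stDelta S m <> 0 -> D1 S m <> 0 -> D2 S m <> 0 -> D3 S m <> 0 ->
  on_cone S lam mu m v ->
  (gc S 2 m * vy v) ^ 2 = qf (gc S) m v * (fF S (vy m) + lam * fL S (vy m) + mu * fQ S (vy m)).
Proof.
  intros H0 H1 H2 H3 [_ [e2 e3]]. unf.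
  match goal with e2 : ?A = 0, e3 : ?B = 0 |- ?L = ?R =>
    assert (Id : L - R = fL S (vy m) * A + fQ S (vy m) * B) by (field; auto) end.
  rewrite e2, e3 in Id. lra.
Qed.

Lemma cone_a3 S lam mu m v : stDelta S m <> 0 -> D1 S m <> 0 -> D2 S m <> 0 -> D3 S m <> 0 ->
  on_cone S lam mu m v ->
  (gc S 3 m * vz v) ^ 2 = qf (gc S) m v * (fG S (vz m) + lam * fM S (vz m) + mu * fR S (vz m)).
Proof.
  intros H0 H1 H2 H3 [_ [e2 e3]]. unf.
  match goal with e2 : ?A = 0, e3 : ?B = 0 |- ?L = ?R =>
    assert (Id : L - R = fM S (vz m) * A + fR S (vz m) * B) by (field; auto) end.
  rewrite e2, e3 in Id. lra.
Qed.

Lemma partial_of k f m d : is_derive (fun t => f (setc m k t)) (coord m k) d -> partial k f m = d.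
Proof. intro H. unfold partial. apply is_derive_unique; auto. Qed.

Ltac pd := unfold gc, stDelta, D1, D2, D3, setc; cbn [vx vy vz coord]; auto_derive;
  [repeat split; assumption | reflexivity].

Lemma cone_c1 S lam mu m v :
  ex_derive (fE S) (vx m) -> ex_derive (fK S) (vx m) -> ex_derive (fP S) (vx m) ->
  stDelta S m <> 0 -> D1 S m <> 0 -> D2 S m <> 0 -> D3 S m <> 0 ->
  on_cone S lam mu m v ->
  (partial 1 (gc S 1) m * vx v ^ 2 + partial 1 (gc S 2) m * vy v ^ 2 + partial 1 (gc S 3) m * vz v ^ 2)
    * gc S 1 m
  = qf (gc S) m v * (Derive (fE S) (vx m) + lam * Derive (fK S) (vx m) + mu * Derive (fP S) (vx m)).
Proof.
  intros dE dK dP H0 H1 H2 H3 C.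
  pose proof (cone_a1 S lam mu m v H0 H1 H2 H3 C) as A1.
  pose proof (cone_a2 S lam mu m v H0 H1 H2 H3 C) as A2.
  pose proof (cone_a3 S lam mu m v H0 H1 H2 H3 C) as A3.
  assert (G1 : gc S 1 m <> 0) by (unfold gc; unfold Rdiv; apply Rmult_integral_contrapositive; split; auto with real).
  assert (G2 : gc S 2 m <> 0) by (unfold gc; unfold Rdiv; apply Rmult_integral_contrapositive; split; auto with real).
  assert (G3 : gc S 3 m <> 0) by (unfold gc; unfold Rdiv; apply Rmult_integral_contrapositive; split; auto with real).
  set (H := qf (gc S) m v) in *. clearbody H.
  assert (X1 : vx v ^ 2 = H * (fE S (vx m) + lam * fK S (vx m) + mu * fP S (vx m)) / gc S 1 m ^ 2)
    by (rewrite <- A1; field; auto).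
  assert (X2 : vy v ^ 2 = H * (fF S (vy m) + lam * fL S (vy m) + mu * fQ S (vy m)) / gc S 2 m ^ 2)
    by (rewrite <- A2; field; auto).
  assert (X3 : vz v ^ 2 = H * (fG S (vz m) + lam * fM S (vz m) + mu * fR S (vz m)) / gc S 3 m ^ 2)
    by (rewrite <- A3; field; auto).
  rewrite X1, X2, X3.
  rewrite (partial_of 1 (gc S 1) m _ ltac:(pd)).
  rewrite (partial_of 1 (gc S 2) m _ ltac:(pd)).
  rewrite (partial_of 1 (gc S 3) m _ ltac:(pd)).
  change (Derive (fun x => fE S x)) with (Derive (fE S)).
  change (Derive (fun x => fK S x)) with (Derive (fK S)).
  change (Derive (fun x => fP S x)) with (Derive (fP S)).
  unfold gc, stDelta, D1, D2, D3 in *. clear -H0 H1 H2 H3. revert H0 H1 H2 H3.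
  generalize (Derive (fE S) (vx m)) (Derive (fK S) (vx m)) (Derive (fP S) (vx m)).
  generalize (fE S (vx m)) (fK S (vx m)) (fP S (vx m)) (fF S (vy m)) (fL S (vy m)) (fQ S (vy m))
    (fG S (vz m)) (fM S (vz m)) (fR S (vz m)).
  intros E K P F L Q G M R0 dE' dK' dP' H0 H1 H2 H3.
  field. unfold Rminus in *. repeat split; auto.
Qed.


Lemma cone_c2 S lam mu m v :
  ex_derive (fF S) (vy m) -> ex_derive (fL S) (vy m) -> ex_derive (fQ S) (vy m) ->
  stDelta S m <> 0 -> D1 S m <> 0 -> D2 S m <> 0 -> D3 S m <> 0 ->
  on_cone S lam mu m v ->
  (partial 2 (gc S 1) m * vx v ^ 2 + partial 2 (gc S 2) m * vy v ^ 2 + partial 2 (gc S 3) m * vz v ^ 2)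
    * gc S 2 m
  = qf (gc S) m v * (Derive (fF S) (vy m) + lam * Derive (fL S) (vy m) + mu * Derive (fQ S) (vy m)).
Proof.
  intros dE dK dP H0 H1 H2 H3 C.
  pose proof (cone_a1 S lam mu m v H0 H1 H2 H3 C) as A1.
  pose proof (cone_a2 S lam mu m v H0 H1 H2 H3 C) as A2.
  pose proof (cone_a3 S lam mu m v H0 H1 H2 H3 C) as A3.
  assert (G1 : gc S 1 m <> 0) by (unfold gc; unfold Rdiv; apply Rmult_integral_contrapositive; split; auto with real).
  assert (G2 : gc S 2 m <> 0) by (unfold gc; unfold Rdiv; apply Rmult_integral_contrapositive; split; auto with real).
  assert (G3 : gc S 3 m <> 0) by (unfold gc; unfold Rdiv; apply Rmult_integral_contrapositive; split; auto with real).
  set (H := qf (gc S) m v) in *. clearbody H.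
  assert (X1 : vx v ^ 2 = H * (fE S (vx m) + lam * fK S (vx m) + mu * fP S (vx m)) / gc S 1 m ^ 2)
    by (rewrite <- A1; field; auto).
  assert (X2 : vy v ^ 2 = H * (fF S (vy m) + lam * fL S (vy m) + mu * fQ S (vy m)) / gc S 2 m ^ 2)
    by (rewrite <- A2; field; auto).
  assert (X3 : vz v ^ 2 = H * (fG S (vz m) + lam * fM S (vz m) + mu * fR S (vz m)) / gc S 3 m ^ 2)
    by (rewrite <- A3; field; auto).
  rewrite X1, X2, X3.
  rewrite (partial_of 2 (gc S 1) m _ ltac:(pd)).
  rewrite (partial_of 2 (gc S 2) m _ ltac:(pd)).
  rewrite (partial_of 2 (gc S 3) m _ ltac:(pd)).
  change (Derive (fun x => fF S x)) with (Derive (fF S)).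
  change (Derive (fun x => fL S x)) with (Derive (fL S)).
  change (Derive (fun x => fQ S x)) with (Derive (fQ S)).
  unfold gc, stDelta, D1, D2, D3 in *. clear -H0 H1 H2 H3. revert H0 H1 H2 H3.
  generalize (Derive (fF S) (vy m)) (Derive (fL S) (vy m)) (Derive (fQ S) (vy m)).
  generalize (fE S (vx m)) (fK S (vx m)) (fP S (vx m)) (fF S (vy m)) (fL S (vy m)) (fQ S (vy m))
    (fG S (vz m)) (fM S (vz m)) (fR S (vz m)).
  intros E K P F L Q G M R0 dE' dK' dP' H0 H1 H2 H3.
  field. unfold Rminus in *. repeat split; auto.
Qed.


Lemma cone_c3 S lam mu m v :
  ex_derive (fG S) (vz m) -> ex_derive (fM S) (vz m) -> ex_derive (fR S) (vz m) ->
  stDelta S m <> 0 -> D1 S m <> 0 -> D2 S m <> 0 -> D3 S m <> 0 ->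
  on_cone S lam mu m v ->
  (partial 3 (gc S 1) m * vx v ^ 2 + partial 3 (gc S 2) m * vy v ^ 2 + partial 3 (gc S 3) m * vz v ^ 2)
    * gc S 3 m
  = qf (gc S) m v * (Derive (fG S) (vz m) + lam * Derive (fM S) (vz m) + mu * Derive (fR S) (vz m)).
Proof.
  intros dE dK dP H0 H1 H2 H3 C.
  pose proof (cone_a1 S lam mu m v H0 H1 H2 H3 C) as A1.
  pose proof (cone_a2 S lam mu m v H0 H1 H2 H3 C) as A2.
  pose proof (cone_a3 S lam mu m v H0 H1 H2 H3 C) as A3.
  assert (G1 : gc S 1 m <> 0) by (unfold gc; unfold Rdiv; apply Rmult_integral_contrapositive; split; auto with real).
  assert (G2 : gc S 2 m <> 0) by (unfold gc; unfold Rdiv; apply Rmult_integral_contrapositive; split; auto with real).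
  assert (G3 : gc S 3 m <> 0) by (unfold gc; unfold Rdiv; apply Rmult_integral_contrapositive; split; auto with real).
  set (H := qf (gc S) m v) in *. clearbody H.
  assert (X1 : vx v ^ 2 = H * (fE S (vx m) + lam * fK S (vx m) + mu * fP S (vx m)) / gc S 1 m ^ 2)
    by (rewrite <- A1; field; auto).
  assert (X2 : vy v ^ 2 = H * (fF S (vy m) + lam * fL S (vy m) + mu * fQ S (vy m)) / gc S 2 m ^ 2)
    by (rewrite <- A2; field; auto).
  assert (X3 : vz v ^ 2 = H * (fG S (vz m) + lam * fM S (vz m) + mu * fR S (vz m)) / gc S 3 m ^ 2)
    by (rewrite <- A3; field; auto).
  rewrite X1, X2, X3.
  rewrite (partial_of 3 (gc S 1) m _ ltac:(pd)).
  rewrite (partial_of 3 (gc S 2) m _ ltac:(pd)).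
  rewrite (partial_of 3 (gc S 3) m _ ltac:(pd)).
  change (Derive (fun x => fG S x)) with (Derive (fG S)).
  change (Derive (fun x => fM S x)) with (Derive (fM S)).
  change (Derive (fun x => fR S x)) with (Derive (fR S)).
  unfold gc, stDelta, D1, D2, D3 in *. clear -H0 H1 H2 H3. revert H0 H1 H2 H3.
  generalize (Derive (fG S) (vz m)) (Derive (fM S) (vz m)) (Derive (fR S) (vz m)).
  generalize (fE S (vx m)) (fK S (vx m)) (fP S (vx m)) (fF S (vy m)) (fL S (vy m)) (fQ S (vy m))
    (fG S (vz m)) (fM S (vz m)) (fR S (vz m)).
  intros E K P F L Q G M R0 dE' dK' dP' H0 H1 H2 H3.
  field. unfold Rminus in *. repeat split; auto.
Qed.


Definition aS S lam (m : V3) : V3 :=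
  mkV3 (I2c S 1 m - lam * gc S 1 m) (I2c S 2 m - lam * gc S 2 m) (I2c S 3 m - lam * gc S 3 m).
Definition bS S mu (m : V3) : V3 :=
  mkV3 (I3c S 1 m - mu * gc S 1 m) (I3c S 2 m - mu * gc S 2 m) (I3c S 3 m - mu * gc S 3 m).

Lemma cone_iff S lam mu m v : on_cone S lam mu m v <-> cone3 (aS S lam m) (bS S mu m) v.
Proof.
  unfold on_cone, cone3, aS, bS. cbn [vx vy vz].
  assert (E1 : qf (I2c S) m v - lam * qf (gc S) m v =
    (I2c S 1 m - lam * gc S 1 m) * vx v ^ 2 + (I2c S 2 m - lam * gc S 2 m) * vy v ^ 2 +
    (I2c S 3 m - lam * gc S 3 m) * vz v ^ 2) by (unfold qf; ring).
  assert (E2 : qf (I3c S) m v - mu * qf (gc S) m v =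
    (I3c S 1 m - mu * gc S 1 m) * vx v ^ 2 + (I3c S 2 m - mu * gc S 2 m) * vy v ^ 2 +
    (I3c S 3 m - mu * gc S 3 m) * vz v ^ 2) by (unfold qf; ring).
  rewrite E1, E2. tauto.
Qed.

Lemma four_iff S lam mu m : four_directions S lam mu m -> four3 (aS S lam m) (bS S mu m).
Proof.
  intros [v1 [v2 [v3 [v4 [C1 [C2 [C3 [C4 [N12 [N13 [N14 [N23 [N24 [N34 Hall]]]]]]]]]]]]]].
  exists v1, v2, v3, v4.
  rewrite <- !cone_iff. repeat (split; [assumption|]).
  intros v Cv. apply Hall. apply cone_iff; auto.
Qed.

Lemma cone_nz S lam mu m v : four_directions S lam mu m -> on_cone S lam mu m v ->
  vx v <> 0 /\ vy v <> 0 /\ vz v <> 0.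
Proof. intros F C. apply (nz3 _ _ _ (four_iff _ _ _ _ F)). apply cone_iff; auto. Qed.

Definition phif S lam mu (k : nat) (u : R) : R :=
  match k with
  | 1%nat => fE S u + lam * fK S u + mu * fP S u
  | 2%nat => fF S u + lam * fL S u + mu * fQ S u
  | _ => fG S u + lam * fM S u + mu * fR S u end.
Definition dphif S lam mu (k : nat) (u : R) : R :=
  match k with
  | 1%nat => Derive (fE S) u + lam * Derive (fK S) u + mu * Derive (fP S) u
  | 2%nat => Derive (fF S) u + lam * Derive (fL S) u + mu * Derive (fQ S) u
  | _ => Derive (fG S) u + lam * Derive (fM S) u + mu * Derive (fR S) u end.

Definition exd9 S (m : V3) : Prop :=
  ex_derive (fE S) (vx m) /\ ex_derive (fK S) (vx m) /\ ex_derive (fP S) (vx m) /\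
  ex_derive (fF S) (vy m) /\ ex_derive (fL S) (vy m) /\ ex_derive (fQ S) (vy m) /\
  ex_derive (fG S) (vz m) /\ ex_derive (fM S) (vz m) /\ ex_derive (fR S) (vz m).

Definition nz4 S m : Prop := stDelta S m <> 0 /\ D1 S m <> 0 /\ D2 S m <> 0 /\ D3 S m <> 0.

Lemma cone_A S lam mu m v k : (1 <= k <= 3)%nat -> nz4 S m -> on_cone S lam mu m v ->
  (gc S k m * coord v k) ^ 2 = qf (gc S) m v * phif S lam mu k (coord m k).
Proof.
  intros Hk [H0 [H1 [H2 H3]]] C.
  destruct k as [|[|[|[|k]]]]; try lia.
  - apply cone_a1; auto.
  - apply cone_a2; auto.
  - apply cone_a3; auto.
Qed.

Lemma cone_C S lam mu m v k : (1 <= k <= 3)%nat -> exd9 S m -> nz4 S m -> on_cone S lam mu m v ->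
  (partial k (gc S 1) m * vx v ^ 2 + partial k (gc S 2) m * vy v ^ 2 + partial k (gc S 3) m * vz v ^ 2)
    * gc S k m = qf (gc S) m v * dphif S lam mu k (coord m k).
Proof.
  intros Hk [e1 [e2 [e3 [e4 [e5 [e6 [e7 [e8 e9]]]]]]]] [H0 [H1 [H2 H3]]] C.
  destruct k as [|[|[|[|k]]]]; try lia.
  - apply cone_c1; auto.
  - apply cone_c2; auto.
  - apply cone_c3; auto.
Qed.

Lemma final_alg p p' T Hq Hq' ph dph vk g :
  p = g * vk -> p <> 0 -> Hq <> 0 -> p ^ 2 = Hq * ph -> T * g = Hq * dph ->
  2 * p * p' = Hq' * ph + Hq * (dph * vk) ->
  p' - / 2 * T = Hq' / (2 * Hq) * g * vk.
Proof.
  intros Ep Hp HH Ha Hc Hd.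
  apply (Rmult_eq_reg_r (2 * p * Hq)); [|apply Rmult_integral_contrapositive; split; [lra|auto]].
  transitivity (2 * p * p' * Hq - T * g * vk * Hq). { rewrite Ep. field. }
  rewrite Hd, Hc.
  transitivity (Hq' * (p ^ 2)). { rewrite Ha. ring. }
  rewrite Ep. field. auto.
Qed.

Lemma exd_gc S k (X Y Z : R -> R) t : (1 <= k <= 3)%nat ->
  ex_derive X t -> ex_derive Y t -> ex_derive Z t ->
  exd9 S (mkV3 (X t) (Y t) (Z t)) -> nz4 S (mkV3 (X t) (Y t) (Z t)) ->
  ex_derive (fun s => gc S k (mkV3 (X s) (Y s) (Z s))) t.
Proof.
  intros Hk dX dY dZ [e1 [e2 [e3 [e4 [e5 [e6 [e7 [e8 e9]]]]]]]] [H0 [H1 [H2 H3]]].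
  unfold stDelta, D1, D2, D3 in *; cbn [vx vy vz] in *.
  destruct k as [|[|[|[|k]]]]; try lia; unfold gc, stDelta, D1, D2, D3; cbn [vx vy vz];
    auto_derive; repeat split; assumption.
Qed.

Lemma isd_phi S lam mu k (X : R -> R) t m : (1 <= k <= 3)%nat -> ex_derive X t -> exd9 S m ->
  X t = coord m k ->
  is_derive (fun s => phif S lam mu k (X s)) t (dphif S lam mu k (X t) * Derive X t).
Proof.
  intros Hk dX [e1 [e2 [e3 [e4 [e5 [e6 [e7 [e8 e9]]]]]]]] EX.
  destruct k as [|[|[|[|k]]]]; try lia; cbn [coord] in EX; rewrite <- EX in *; unfold phif, dphif;
    auto_derive; try (repeat split; assumption);
  change (Derive (fun x => fE S x)) with (Derive (fE S));
  change (Derive (fun x => fK S x)) with (Derive (fK S));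
  change (Derive (fun x => fP S x)) with (Derive (fP S));
  change (Derive (fun x => fF S x)) with (Derive (fF S));
  change (Derive (fun x => fL S x)) with (Derive (fL S));
  change (Derive (fun x => fQ S x)) with (Derive (fQ S));
  change (Derive (fun x => fG S x)) with (Derive (fG S));
  change (Derive (fun x => fM S x)) with (Derive (fM S));
  change (Derive (fun x => fR S x)) with (Derive (fR S));
  change (Derive (fun x => X x)) with (Derive X); ring.
Qed.

Lemma exd_qf (c1 c2 c3 w1 w2 w3 : R -> R) t :
  ex_derive c1 t -> ex_derive c2 t -> ex_derive c3 t ->
  ex_derive w1 t -> ex_derive w2 t -> ex_derive w3 t ->
  ex_derive (fun s => c1 s * w1 s ^ 2 + c2 s * w2 s ^ 2 + c3 s * w3 s ^ 2) t.
Proof. intros. auto_derive. repeat split; assumption. Qed.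

Lemma isd_sq (f : R -> R) t : ex_derive f t -> is_derive (fun s => f s ^ 2) t (2 * f t * Derive f t).
Proof. intros. auto_derive. auto. change (Derive (fun x => f x)) with (Derive f). ring. Qed.

Lemma isd_mul (f g : R -> R) t dg : ex_derive f t -> is_derive g t dg ->
  is_derive (fun s => f s * g s) t (Derive f t * g t + f t * dg).
Proof.
  intros Hf Hg. apply (is_derive_mult f g t (Derive f t) dg) in Hg; [|apply Derive_correct; auto|].
  - unfold plus, mult in Hg; simpl in Hg. exact Hg.
  - intros; apply Rmult_comm.
Qed.

Lemma loc_int a b t : a < t < b -> locally t (fun s => a < s < b).
Proof. intro H. apply (open_and _ _ (open_gt a) (open_lt b) t H). Qed.

Lemma vel_coord gam t k : (1 <= k <= 3)%nat ->
  coord (vel gam t) k = Derive (fun s => coord (gam s) k) t.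
Proof. intro Hk. destruct k as [|[|[|[|k]]]]; try lia; reflexivity. Qed.

Lemma gc_nz S k m : (1 <= k <= 3)%nat -> nz4 S m -> gc S k m <> 0.
Proof.
  intros Hk [H0 [H1 [H2 H3]]].
  destruct k as [|[|[|[|k]]]]; try lia; unfold gc; unfold Rdiv;
    apply Rmult_integral_contrapositive; split; auto with real.
Qed.

Lemma coord_nz v k : (1 <= k <= 3)%nat -> vx v <> 0 /\ vy v <> 0 /\ vz v <> 0 -> coord v k <> 0.
Proof. intros Hk [a [b c]]. destruct k as [|[|[|[|k]]]]; try lia; simpl; auto. Qed.

Lemma geod S U lam mu a b gam :
  (forall m, U m -> nz4 S m) -> (forall m, U m -> exd9 S m) ->
  (forall m, U m -> four_directions S lam mu m) ->
  regular_curve U a b gam ->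
  (forall t, a < t < b -> on_cone S lam mu (gam t) (vel gam t)) ->
  pregeodesic S a b gam.
Proof.
  intros HN HE HF [_ RC] Hc.
  set (Hq := fun s => qf (gc S) (gam s) (vel gam s)).
  exists (fun t => Derive Hq t / (2 * Hq t)).
  intros t Ht k Hk.
  destruct (RC t Ht) as [Ut [Dk Vnz]].
  destruct (Dk 1%nat ltac:(lia)) as [dX ddX].
  destruct (Dk 2%nat ltac:(lia)) as [dY ddY].
  destruct (Dk 3%nat ltac:(lia)) as [dZ ddZ].
  destruct (Dk k Hk) as [dK ddK].
  cbn [coord] in dX, ddX, dY, ddY, dZ, ddZ.
  set (p := fun s => gc S k (gam s) * coord (vel gam s) k).
  assert (Egc : forall j, (1 <= j <= 3)%nat -> ex_derive (fun s => gc S j (gam s)) t).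
  { intros j Hj. apply (ex_derive_ext (fun s => gc S j (mkV3 (vx (gam s)) (vy (gam s)) (vz (gam s))))).
    - intro s; destruct (gam s); reflexivity.
    - apply exd_gc; auto; destruct (gam t); auto. }
  assert (Ep : ex_derive p t).
  { unfold p. apply (ex_derive_mult (fun s => gc S k (gam s)) (fun s => coord (vel gam s) k)); auto.
    apply (ex_derive_ext (Derive (fun s => coord (gam s) k))); auto.
    intro s; rewrite vel_coord; auto. }
  assert (EH : ex_derive Hq t).
  { unfold Hq, qf. apply exd_qf; auto; apply Egc; lia. }
  assert (Hloc : locally t (fun s => p s ^ 2 = Hq s * phif S lam mu k (coord (gam s) k))).
  { apply (filter_imp (fun s => a < s < b)); [|apply loc_int; auto].
    intros s Hs. destruct (RC s Hs) as [Us _]. unfold p, Hq.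
    apply cone_A; auto. }
  assert (D1' := isd_sq p t Ep).
  assert (D2' := isd_mul Hq (fun s => phif S lam mu k (coord (gam s) k)) t _ EH
           (isd_phi S lam mu k (fun s => coord (gam s) k) t (gam t) Hk dK (HE _ Ut) eq_refl)).
  apply (is_derive_ext_loc _ _ _ _ Hloc) in D1'.
  assert (Eq : 2 * p t * Derive p t = Derive Hq t * phif S lam mu k (coord (gam t) k) +
     Hq t * (dphif S lam mu k (coord (gam t) k) * Derive (fun s => coord (gam s) k) t)).
  { rewrite <- (is_derive_unique _ _ _ D1'). apply is_derive_unique. exact D2'. }
  assert (Cn := cone_nz S lam mu (gam t) (vel gam t) (HF _ Ut) (Hc t Ht)).
  assert (Pn : p t <> 0).
  { unfold p. apply Rmult_integral_contrapositive; split.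
    apply gc_nz; auto. apply coord_nz; auto. }
  assert (HA := cone_A S lam mu (gam t) (vel gam t) k Hk (HN _ Ut) (Hc t Ht)).
  assert (Hn : Hq t <> 0).
  { intro Z. apply Pn. fold p in HA. unfold Hq in Z. rewrite Z in HA.
    apply Rsqr_0_uniq. unfold Rsqr. replace (p t * p t) with (p t ^ 2) by ring. unfold p. rewrite HA; ring. }
  assert (HC := cone_C S lam mu (gam t) (vel gam t) k Hk (HE _ Ut) (HN _ Ut) (Hc t Ht)).
  apply (final_alg (p t) (Derive p t) _ (Hq t) (Derive Hq t)
           (phif S lam mu k (coord (gam t) k)) (dphif S lam mu k (coord (gam t) k))
           (coord (vel gam t) k) (gc S k (gam t))); auto.
  rewrite <- vel_coord in Eq; auto.
Qed.

Definition fl1 (v : V3) := mkV3 (- vx v) (vy v) (vz v).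
Definition fl2 (v : V3) := mkV3 (vx v) (- vy v) (vz v).
Definition fl3 (v : V3) := mkV3 (vx v) (vy v) (- vz v).

Lemma refl1 S m v : gc S 1 m <> 0 -> greflect S m (e_ 1) v = fl1 v.
Proof. intro H. destruct v as [x y z]. unfold greflect, v3sub, v3scale, gbil, fl1, e_; cbn [vx vy vz Nat.eqb]. f_equal; field; auto. Qed.
Lemma refl2 S m v : gc S 2 m <> 0 -> greflect S m (e_ 2) v = fl2 v.
Proof. intro H. destruct v as [x y z]. unfold greflect, v3sub, v3scale, gbil, fl2, e_; cbn [vx vy vz Nat.eqb]. f_equal; field; auto. Qed.
Lemma refl3 S m v : gc S 3 m <> 0 -> greflect S m (e_ 3) v = fl3 v.
Proof. intro H. destruct v as [x y z]. unfold greflect, v3sub, v3scale, gbil, fl3, e_; cbn [vx vy vz Nat.eqb]. f_equal; field; auto. Qed.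

Lemma cone_fl a b v x' y' z' : cone3 a b v -> x' ^ 2 = vx v ^ 2 -> y' ^ 2 = vy v ^ 2 -> z' ^ 2 = vz v ^ 2 ->
  cone3 a b (mkV3 x' y' z').
Proof.
  intros [Z [A1 B1]] E1 E2 E3. split; [|cbn [vx vy vz]; rewrite E1, E2, E3; auto].
  intro E; injection E; intros; subst. apply Z. destruct v as [x y z]; cbn [vx vy vz] in *.
  unfold v3zero; f_equal; apply Rsqr_0_uniq; unfold Rsqr; simpl in *; lra.
Qed.

Lemma on_cone_fl S lam mu m v x' y' z' : on_cone S lam mu m v ->
  x' ^ 2 = vx v ^ 2 -> y' ^ 2 = vy v ^ 2 -> z' ^ 2 = vz v ^ 2 -> on_cone S lam mu m (mkV3 x' y' z').
Proof. intros H E1 E2 E3. apply cone_iff. apply cone_iff in H. eapply cone_fl; eauto. Qed.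

Lemma nsl_gen x y z x' y' z' :
  (x' = - x /\ x <> 0 /\ ((y' = y /\ y <> 0) \/ (z' = z /\ z <> 0))) \/
  (y' = - y /\ y <> 0 /\ ((x' = x /\ x <> 0) \/ (z' = z /\ z <> 0))) \/
  (z' = - z /\ z <> 0 /\ ((x' = x /\ x <> 0) \/ (y' = y /\ y <> 0))) ->
  ~ same_line (mkV3 x y z) (mkV3 x' y' z').
Proof.
  intros H [c [Hc E]]. unfold v3scale in E; cbn [vx vy vz] in E. injection E; intros E3 E2 E1.
  destruct H as [[-> [Hx [[-> Hy]|[-> Hz]]]]|[[-> [Hy [[-> Hx]|[-> Hz]]]]|[-> [Hz [[-> Hx]|[-> Hy]]]]]].
  - assert (c = 1) by (apply (Rmult_eq_reg_r y); lra). subst. apply Hx; lra.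
  - assert (c = 1) by (apply (Rmult_eq_reg_r z); lra). subst. apply Hx; lra.
  - assert (c = 1) by (apply (Rmult_eq_reg_r x); lra). subst. apply Hy; lra.
  - assert (c = 1) by (apply (Rmult_eq_reg_r z); lra). subst. apply Hy; lra.
  - assert (c = 1) by (apply (Rmult_eq_reg_r x); lra). subst. apply Hz; lra.
  - assert (c = 1) by (apply (Rmult_eq_reg_r y); lra). subst. apply Hz; lra.
Qed.

Lemma part2 S lam mu m : nz4 S m -> four_directions S lam mu m ->
     (forall k, (1 <= k <= 3)%nat ->
        gbil S m (e_ k) (e_ k) <> 0 /\
        forall w, in_pi k w -> gbil S m (e_ k) w = 0) /\
     gbil S m (e_ 1) (e_ 2) = 0 /\ gbil S m (e_ 1) (e_ 3) = 0 /\
     gbil S m (e_ 2) (e_ 3) = 0 /\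
     forall v, on_cone S lam mu m v ->
       (forall k, (1 <= k <= 3)%nat ->
          on_cone S lam mu m (greflect S m (e_ k) v) /\
          ~ same_line v (greflect S m (e_ k) v)) /\
       ~ same_line (greflect S m (e_ 1) v) (greflect S m (e_ 2) v) /\
       ~ same_line (greflect S m (e_ 1) v) (greflect S m (e_ 3) v) /\
       ~ same_line (greflect S m (e_ 2) v) (greflect S m (e_ 3) v).
Proof.
  intros HN HF.
  assert (G1 := gc_nz S 1 m ltac:(lia) HN).
  assert (G2 := gc_nz S 2 m ltac:(lia) HN).
  assert (G3 := gc_nz S 3 m ltac:(lia) HN).
  split; [|split; [|split; [|split]]].
  - intros k Hk. destruct k as [|[|[|[|k]]]]; try lia; unfold gbil, in_pi, e_; cbn [vx vy vz Nat.eqb coord];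
      (split; [intro E; ring_simplify in E; auto | intros w Hw; rewrite Hw; ring]).
  - unfold gbil, e_; cbn [vx vy vz Nat.eqb]; ring.
  - unfold gbil, e_; cbn [vx vy vz Nat.eqb]; ring.
  - unfold gbil, e_; cbn [vx vy vz Nat.eqb]; ring.
  - intros v Hv. rewrite (refl1 S m v G1), (refl2 S m v G2), (refl3 S m v G3).
    destruct (cone_nz S lam mu m v HF Hv) as [Hx [Hy Hz]].
    destruct v as [x y z]; unfold fl1, fl2, fl3; cbn [vx vy vz] in *.
    split; [|split; [|split]].
    + intros k Hk. destruct k as [|[|[|[|k]]]]; try lia.
      * rewrite (refl1 S m _ G1). unfold fl1; cbn [vx vy vz]. split.
        -- apply on_cone_fl with (1 := Hv); cbn [vx vy vz]; ring.
        -- apply nsl_gen. left. repeat split; auto.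
      * rewrite (refl2 S m _ G2). unfold fl2; cbn [vx vy vz]. split.
        -- apply on_cone_fl with (1 := Hv); cbn [vx vy vz]; ring.
        -- apply nsl_gen. right; left. repeat split; auto.
      * rewrite (refl3 S m _ G3). unfold fl3; cbn [vx vy vz]. split.
        -- apply on_cone_fl with (1 := Hv); cbn [vx vy vz]; ring.
        -- apply nsl_gen. right; right. repeat split; auto.
    + intros [c [Hc E]]. unfold v3scale in E; cbn [vx vy vz] in E. injection E; intros E3 E2 E1.
      assert (c = 1) by (apply (Rmult_eq_reg_r z); lra). subst. apply Hx; lra.
    + intros [c [Hc E]]. unfold v3scale in E; cbn [vx vy vz] in E. injection E; intros E3 E2 E1.
      assert (c = 1) by (apply (Rmult_eq_reg_r y); lra). subst. apply Hx; lra.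
    + intros [c [Hc E]]. unfold v3scale in E; cbn [vx vy vz] in E. injection E; intros E3 E2 E1.
      assert (c = 1) by (apply (Rmult_eq_reg_r x); lra). subst. apply Hy; lra.
Qed.

Lemma part3 U k : (1 <= k <= 3)%nat -> frobenius_integrable U (fun _ => e_ k).
Proof.
  intros Hk m Um. unfold curl, partial. rewrite !Derive_const. split.
  - destruct k as [|[|[|[|k]]]]; try lia; unfold e_; simpl; intro E; injection E; lra.
  - cbn [vx vy vz]. ring.
Qed.

Theorem proposition1 (S : StackelData) (U : V3 -> Prop) (lam mu : R) :
  open_in_R3 U ->
  (forall m, U m ->
     smooth_at (fE S) (vx m) /\ smooth_at (fK S) (vx m) /\ smooth_at (fP S) (vx m) /\
     smooth_at (fF S) (vy m) /\ smooth_at (fL S) (vy m) /\ smooth_at (fQ S) (vy m) /\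
     smooth_at (fG S) (vz m) /\ smooth_at (fM S) (vz m) /\ smooth_at (fR S) (vz m)) ->
  (forall m, U m -> stDelta S m <> 0 /\ D1 S m <> 0 /\ D2 S m <> 0 /\ D3 S m <> 0) ->
  (forall m, U m -> four_directions S lam mu m) ->
  (* (1) integral curves of the direction fields tau_i are geodesics *)
  (forall (a b : R) (gam : R -> V3),
     regular_curve U a b gam ->
     (forall t, a < t < b -> on_cone S lam mu (gam t) (vel gam t)) ->
     pregeodesic S a b gam) /\
  (* (2) the planes pi_1, pi_2, pi_3 (with g-normals e_1, e_2, e_3) are mutually
         g-orthogonal, and reflections in them permute the four directions *)
  (forall m, U m ->
     (forall k, (1 <= k <= 3)%nat ->
        gbil S m (e_ k) (e_ k) <> 0 /\
        forall w, in_pi k w -> gbil S m (e_ k) w = 0) /\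
     gbil S m (e_ 1) (e_ 2) = 0 /\ gbil S m (e_ 1) (e_ 3) = 0 /\
     gbil S m (e_ 2) (e_ 3) = 0 /\
     forall v, on_cone S lam mu m v ->
       (forall k, (1 <= k <= 3)%nat ->
          on_cone S lam mu m (greflect S m (e_ k) v) /\
          ~ same_line v (greflect S m (e_ k) v)) /\
       ~ same_line (greflect S m (e_ 1) v) (greflect S m (e_ 2) v) /\
       ~ same_line (greflect S m (e_ 1) v) (greflect S m (e_ 3) v) /\
       ~ same_line (greflect S m (e_ 2) v) (greflect S m (e_ 3) v)) /\
  (* (3) the distributions pi_k = ker dx_k are integrable *)
  (forall k, (1 <= k <= 3)%nat -> frobenius_integrable U (fun _ => e_ k)).
Proof.
  intros _ HS HN HF.
  assert (HE : forall m, U m -> exd9 S m).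
  { intros m Um. destruct (HS m Um) as [s1 [s2 [s3 [s4 [s5 [s6 [s7 [s8 s9]]]]]]]].
    unfold exd9. repeat split; [exact (s1 1%nat)|exact (s2 1%nat)|exact (s3 1%nat)|exact (s4 1%nat)
      |exact (s5 1%nat)|exact (s6 1%nat)|exact (s7 1%nat)|exact (s8 1%nat)|exact (s9 1%nat)]. }
  split; [|split].
  - intros a b gam RC Hc. apply (geod S U lam mu a b gam); auto.
  - intros m Um. apply part2; auto. exact (HN m Um).
  - intros k Hk. apply part3; auto.
Qed.
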